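(* The following are true: (i) $T_0<T_{1}<T_2<T_{3}$ for $4\pi$-arc $LSL$ paths; (ii) $T_{-1}<T_{-2}<T_{-3}<T_{-4}$ for $4\pi$-arc $RSR$ paths.
   Context: A curvature-constrained (Dubins) vehicle with unit speed $v=1$ and minimum turning radius $r>0$ moves in a steady environmental current with velocity $(w_x,w_y)=(v_w\cos\theta_w, v_w\sin\theta_w)$, where $0<v_w<1$, according to $\dot x = \cos\theta + w_x$, $\dot y=\sin\theta + w_y$, $\dot\theta = u$, $|u|\le 1/r$. The start pose is $(0,0,0)$ and the goal pose is $(x_f,y_f,\theta_f)$ with $\theta_f\in[0,2\pi)$. In the frame moving with the current, an $L^{\alpha}S^{\beta}L^{\gamma}$ path (left arc of angle $\alpha$, straight segment of length $\beta\ge 0$, left arc of angle $\gamma$) reaching the goal with total travel time $T$ must satisfy $x_f - w_x T = r\sin\theta_f + \beta\cos\alpha$, $y_f - w_y T = r(1-\cos\theta_f)+\beta\sin\alpha$, $T = r(\alpha+\gamma)+\beta$, $\alpha+\gamma = 2k\pi+\theta_f$ with $k\in\mathbb{Z}$. An $R^{\alpha}S^{\beta}R^{\gamma}$ path must satisfy $x_f - w_x T = -r\sin\theta_f + \beta\cos\alpha$, $y_f - w_y T = -r(1-\cos\theta_f)-\beta\sin\alpha$, $T = r(\alpha+\gamma)+\beta$, $-\alpha-\gamma = 2k\pi+\theta_f$. A $4\pi$-arc path is one with $\alpha,\gamma\in[0,4\pi)$; this gives $k\in\{0,1,2,3\}$ for $LSL$ and $k\in\{-1,-2,-3,-4\}$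 for $RSR$. For a given $k$, $\beta_k$ denotes the straight-segment length of the corresponding solution and $T_k$ its travel time, so that $T_k = 2k\pi r + r\theta_f + \beta_k$ for an $LSL$ path and $T_k = -2k\pi r - r\theta_f + \beta_k$ for an $RSR$ path. *)

(* Defs.v *)
From Stdlib Require Import Reals Lra ZArith.
Open Scope R_scope.

(* An L^alpha S^beta L^gamma path with winding index k reaching (xf,yf,thf)
   from (0,0,0) in the current (wx,wy) with travel time T (equations written
   in the frame moving with the current). *)
Definition LSL_solution (r wx wy xf yf thf : R) (k : Z)
    (alpha beta gamma T : R) : Prop :=
  xf - wx * T = r * sin thf + beta * cos alpha /\
  yf - wy * T = r * (1 - cos thf) + beta * sin alpha /\
  T = r * (alpha + gamma) + beta /\
  alpha + gamma = 2 * IZR k * PI + thf /\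
  0 <= beta.

Definition RSR_solution (r wx wy xf yf thf : R) (k : Z)
    (alpha beta gamma T : R) : Prop :=
  xf - wx * T = - r * sin thf + beta * cos alpha /\
  yf - wy * T = - r * (1 - cos thf) - beta * sin alpha /\
  T = r * (alpha + gamma) + beta /\
  - alpha - gamma = 2 * IZR k * PI + thf /\
  0 <= beta.

Definition four_pi_arc (alpha gamma : R) : Prop :=
  0 <= alpha < 4 * PI /\ 0 <= gamma < 4 * PI.

(* Main.v *)
Require Import Defs.
From Stdlib Require Import Reals ZArith Lra Psatz.
Open Scope R_scope.

Lemma core (b b' ca sa ca' sa' D vw c : R) :
  ca*ca+sa*sa=1 -> ca'*ca'+sa'*sa'=1 -> 0<=vw<1 -> 0<=b -> 0<=b' ->
  0<=D -> 0<c -> b - b' = D + c ->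
  (b*ca - b'*ca')*(b*ca - b'*ca') + (b*sa - b'*sa')*(b*sa - b'*sa') = vw*vw*(D*D) -> False.
Proof.
  intros H1 H2 Hv Hb Hb' HD Hc Hbb Heq.
  assert (Hcc : ca*ca'+sa*sa' <= 1) by (assert (0 <= (ca-ca')*(ca-ca') + (sa-sa')*(sa-sa')) by (apply Rplus_le_le_0_compat; apply Rle_0_sqr); lra).
  assert (Hge : (b*ca - b'*ca')*(b*ca - b'*ca') + (b*sa - b'*sa')*(b*sa - b'*sa') >= (b-b')*(b-b')).
  { assert (E: (b*ca - b'*ca')*(b*ca - b'*ca') + (b*sa - b'*sa')*(b*sa - b'*sa')
       = b*b*(ca*ca+sa*sa) + b'*b'*(ca'*ca'+sa'*sa') - 2*b*b'*(ca*ca'+sa*sa')) by ring.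
    rewrite E, H1, H2. assert (0 <= b*b') by (apply Rmult_le_pos; lra). assert (0 <= b*b'*(1-(ca*ca'+sa*sa'))) by (apply Rmult_le_pos; lra). lra. }
  assert (vw*vw*(D*D) <= D*D) by (assert (0 <= (1 - vw*vw)*(D*D)) by (apply Rmult_le_pos; nra); lra).
  nra.
Qed.

Theorem theorem2 :
  forall (r vw thw xf yf thf : R),
    0 < r -> 0 < vw < 1 -> 0 <= thf < 2 * PI ->
    let wx := vw * cos thw in
    let wy := vw * sin thw in
    (* (i) LSL: T_0 < T_1 < T_2 < T_3, i.e. T_k strictly increasing in k *)
    (forall (k k' : Z) (a b g T a' b' g' T' : R),
        (0 <= k)%Z -> (k < k')%Z -> (k' <= 3)%Z ->
        four_pi_arc a g -> LSL_solution r wx wy xf yf thf k a b g T ->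
        four_pi_arc a' g' -> LSL_solution r wx wy xf yf thf k' a' b' g' T' ->
        T < T')
    /\
    (* (ii) RSR: T_{-1} < T_{-2} < T_{-3} < T_{-4} *)
    (forall (k k' : Z) (a b g T a' b' g' T' : R),
        (-4 <= k')%Z -> (k' < k)%Z -> (k <= -1)%Z ->
        four_pi_arc a g -> RSR_solution r wx wy xf yf thf k a b g T ->
        four_pi_arc a' g' -> RSR_solution r wx wy xf yf thf k' a' b' g' T' ->
        T < T').
Proof.
  intros r vw thw xf yf thf Hr Hv Hth wx wy.
  assert (Hw : cos thw * cos thw + sin thw * sin thw = 1)
    by (pose proof (sin2_cos2 thw); unfold Rsqr in *; lra).
  pose proof PI_RGT_0 as Hpi.
  split.
  - intros k k' a b g T a' b' g' T' Hk Hkk Hk' _ [E1 [E2 [E3 [E4 Eb]]]] _ [F1 [F2 [F3 [F4 Fb]]]].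
    destruct (Rlt_or_le T T') as [|HD]; [assumption|exfalso].
    assert (Hkr : 1 <= IZR k' - IZR k) by (rewrite <- minus_IZR; apply IZR_le; lia).
    apply (core b b' (cos a) (sin a) (cos a') (sin a') (T - T') vw (2*(IZR k' - IZR k)*PI*r)).
    + pose proof (sin2_cos2 a); unfold Rsqr in *; lra.
    + pose proof (sin2_cos2 a'); unfold Rsqr in *; lra.
    + lra.
    + lra.
    + lra.
    + lra.
    + assert (0 < (IZR k' - IZR k)*PI) by nra. nra.
    + rewrite E4 in E3. rewrite F4 in F3. lra.
    + assert (X : b*cos a - b'*cos a' = - wx*(T-T')) by lra.
      assert (Y : b*sin a - b'*sin a' = - wy*(T-T')) by lra.
      rewrite X, Y. unfold wx, wy.
      replace (vw*vw*((T-T')*(T-T'))) with (vw*vw*((T-T')*(T-T'))*(cos thw * cos thw + sin thw * sin thw)) by (rewrite Hw; ring).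
      ring.
  - intros k k' a b g T a' b' g' T' Hk Hkk Hk' _ [E1 [E2 [E3 [E4 Eb]]]] _ [F1 [F2 [F3 [F4 Fb]]]].
    destruct (Rlt_or_le T T') as [|HD]; [assumption|exfalso].
    assert (Hkr : 1 <= IZR k - IZR k') by (rewrite <- minus_IZR; apply IZR_le; lia).
    apply (core b b' (cos a) (- sin a) (cos a') (- sin a') (T - T') vw (2*(IZR k - IZR k')*PI*r)).
    + pose proof (sin2_cos2 a); unfold Rsqr in *; lra.
    + pose proof (sin2_cos2 a'); unfold Rsqr in *; lra.
    + lra.
    + lra.
    + lra.
    + lra.
    + assert (0 < (IZR k - IZR k')*PI) by nra. nra.
    + assert (T = - r*(2 * IZR k * PI + thf) + b) by (rewrite <- E4; lra).
      assert (T' = - r*(2 * IZR k' * PI + thf) + b') by (rewrite <- F4; lra).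
      nra.
    + assert (X : b*cos a - b'*cos a' = - wx*(T-T')) by lra.
      assert (Y : b*(- sin a) - b'*(- sin a') = - wy*(T-T')) by lra.
      rewrite X, Y. unfold wx, wy.
      replace (vw*vw*((T-T')*(T-T'))) with (vw*vw*((T-T')*(T-T'))*(cos thw * cos thw + sin thw * sin thw)) by (rewrite Hw; ring).
      ring.
Qed.
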